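(* In the setting described in the context, let \texttt{Orienteering} be a routine that solves the orienteering problem within constant factor $1/\lambda$ (with $\lambda\ge 1$): for any node weights $\nu(j)\ge 0$ it returns a path $\hat\rho\in\mathcal{X}(p_s,\omega)$ such that for every path $\rho\in\mathcal{X}(p_s,\omega)$, $$\sum_{j=1}^V \mathbb{I}_j(\hat{\rho})\nu(j) \ge \frac{1}{\lambda}\sum_{j=1}^V \mathbb{I}_j(\rho)\nu(j).$$ Let $c_j>0$ for $j=1,\dots,V$, and let $\hat\rho$ be the path returned by \texttt{Orienteering} with node weights $\nu(j)=\zeta_j c_j$. Then for every $\rho\in\mathcal{X}(p_s,\omega)$, $$\sum_{j=1}^Vc_j\,\mathbb{E}[z_j(\hat{\rho})] \ge \frac{p_s}{\lambda}\sum_{j=1}^V c_j\,\mathbb{E}[z_j(\rho)].$$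
   Context: Let $\mathcal{G}=(\mathcal{V},\mathcal{E})$ be a finite simple graph with node set $\mathcal{V}=\{1,\dots,V\}$ and edge weights $\omega:\mathcal{E}\to(0,1]$ (survival probabilities). A path $\rho$ is a sequence of nodes $\rho(0),\dots,\rho(\lvert\rho\rvert)$ with $(\rho(n-1),\rho(n))\in\mathcal{E}$ for each $n$. For a path $\rho$, let $s_n(\rho)$, $n=1,\dots,\lvert\rho\rvert$, be independent Bernoulli variables with $\mathbb{P}\{s_n(\rho)=1\}=\omega((\rho(n-1),\rho(n)))$, $a_n(\rho)=\prod_{i=1}^n s_i(\rho)$, and $z_j(\rho)=\max_{n=1,\dots,\lvert\rho\rvert} a_n(\rho)\,\mathbb{I}\{\rho(n)=j\}$. Let $\mathbb{I}_j(\rho)$ equal $1$ if $\rho(n)=j$ for some $n\in\{1,\dots,\lvert\rho\rvert\}$ and $0$ otherwise. Given start node $v_s$, terminal node $v_t$ and $p_s\in(0,1]$, $\mathcal{X}(p_s,\omega)$ is the (assumed nonempty) set of paths $\rho$ with $\rho(0)=v_s$, $\rho(\lvert\rho\rvert)=v_t$ and $\mathbb{P}\{a_{\lvert\rho\rvert}(\rho)=1\}\ge p_s$ (equivalently $\sum_{e\in\rho}-\log\omega(e)\le-\log p_s$). Define $\zeta_j=\max_{\rho\in\mathcal{X}(p_s,\omega)}\mathbb{E}[z_j(\rho)]$ (with $\zeta_j=0$ if no feasible path reaches $j$). *)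

(* Defs.v *)
From HB Require Import structures.
From mathcomp Require Import all_boot all_order all_algebra.
From mathcomp Require Import all_classical all_reals.
Set Implicit Arguments. Unset Strict Implicit. Unset Printing Implicit Defensive.
Import Order.TTheory GRing.Theory Num.Theory.
Local Open Scope ring_scope.

(* Nodes are 'I_V (node j of the paper is the ordinal j-1).
   A path rho is a nonempty sequence [rho(0); rho(1); ...; rho(|rho|)]
   of nodes; rho(n) := nth default rho n. *)

Section Defs.
Variables (R : realType) (V : nat).
Implicit Types (rho : seq 'I_V).

Definition plen rho : nat := (size rho).-1.

Definition pnode (d : 'I_V) rho (n : nat) : 'I_V := nth d rho n.

Definition is_path (e : rel 'I_V) (vs vt : 'I_V) rho : bool :=
  [&& rho != [::], head vs rho == vs, last vs rho == vt & path e vs (behead rho)].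

(* survival probability of the n-th step (n = 1..|rho|): omega(rho(n-1),rho(n)) *)
Definition stepw (omega : 'I_V -> 'I_V -> R) (d : 'I_V) rho (n : nat) : R :=
  omega (pnode d rho n.-1) (pnode d rho n).

(* Outcome space of (s_1,...,s_|rho|): s i = s_(i+1) *)
Definition outcome rho := {ffun 'I_(plen rho) -> bool}.

Definition out_prob omega d rho (s : outcome rho) : R :=
  \prod_(i < plen rho) (if s i then stepw omega d rho i.+1
                        else 1 - stepw omega d rho i.+1).

Definition Expect omega d rho (X : outcome rho -> R) : R :=
  \sum_(s : outcome rho) @out_prob omega d rho s * X s.

Definition a_var rho (n : nat) (s : outcome rho) : R :=
  \prod_(i < plen rho | (i < n)%N) ((s i)%:R : R).

(* z_j(rho) = max_{n=1..|rho|} a_n(rho) * I{rho(n) = j}  (max over empty range = 0) *)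
Definition z_var (d : 'I_V) rho (j : 'I_V) (s : outcome rho) : R :=
  \big[Num.max/0]_(i < plen rho)
     (@a_var rho i.+1 s * ((pnode d rho i.+1 == j) : bool)%:R).

Definition Ez omega d rho (j : 'I_V) : R := @Expect omega d rho (@z_var d rho j).

Definition Psurv omega d rho : R :=
  @Expect omega d rho (fun s => ((@a_var rho (plen rho) s == 1) : bool)%:R).

Definition Ivis rho (j : 'I_V) : R := ((j \in behead rho) : bool)%:R.

Definition feasible e omega vs vt (ps : R) rho : Prop :=
  is_path e vs vt rho /\ ps <= Psurv omega vs rho.

(* zeta_j = max over feasible paths of E[z_j(rho)] (taken as the supremum;
   it equals 0 when no feasible path reaches j) *)
Definition zeta e omega vs vt (ps : R) (j : 'I_V) : R :=
  sup [set Ez omega vs rho j | rho in [set rho | feasible e omega vs vt ps rho]]%classic.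

End Defs.
Arguments Ivis {R V} rho j.

(* Main.v *)
Require Import Defs.
From HB Require Import structures.
From mathcomp Require Import all_boot all_order all_algebra.
From mathcomp Require Import all_classical all_reals.
Import Order.TTheory GRing.Theory Num.Theory.
Local Open Scope ring_scope.

Lemma a_varE (R : realType) (V : nat) (rho : seq 'I_V) n (s : outcome rho) :
  a_var R n s = ([forall i : 'I_(plen rho), (i < n)%N ==> s i] : bool)%:R.
Proof.
rewrite /a_var; case: forallP => H.
  by rewrite big1 // => i lt; have := H i; rewrite lt /= => ->.
move/forallPn: (introN forallP H) => [i]; rewrite negb_imply => /andP[lt ns].
by rewrite (bigD1 i) //= (negbTE ns) mul0r.
Qed.

Lemma a_mono (R : realType) (V : nat) (rho : seq 'I_V) m n (s : outcome rho) :
  (m <= n)%N -> a_var R n s <= a_var R m s.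
Proof.
move=> mn; rewrite !a_varE.
case: (boolP [forall i : 'I_(plen rho), (i < m)%N ==> s i]) => Hm;
case: (boolP [forall i : 'I_(plen rho), (i < n)%N ==> s i]) => Hn //=.
case/negP: Hm; apply/forallP => i; apply/implyP => lt.
by move/forallP: Hn => /(_ i); rewrite (leq_trans lt mn).
Qed.

Lemma big_max_ge (R : realType) (I : eqType) (r : seq I) (F : I -> R) k :
  k \in r -> F k <= \big[Num.max/0]_(i <- r) F i.
Proof.
elim: r => // x r IH; rewrite inE big_cons => /orP[/eqP ->|/IH h].
  by rewrite le_max lexx.
by rewrite le_max h orbT.
Qed.

Lemma sum_out_prob (R : realType) (V : nat) omega d (rho : seq 'I_V) :
  \sum_(s : outcome rho) @out_prob R V omega d rho s = 1.
Proof.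
transitivity (\prod_(i < plen rho) \sum_(b : bool)
   (if b then stepw omega d rho i.+1 else 1 - stepw omega d rho i.+1)).
  by rewrite bigA_distr_bigA.
by rewrite big1 // => i _; rewrite big_bool /= addrC subrK.
Qed.

Arguments a_mono {R V rho m n} s.
Arguments big_max_ge {R I r F k}.

Lemma feas_step (R : realType) (V : nat) (e : rel 'I_V) (omega : 'I_V -> 'I_V -> R)
  vs vt ps rho :
  (forall u v, e u v -> 0 < omega u v <= 1) -> feasible e omega vs vt ps rho ->
  forall i, (i < plen rho)%N -> 0 <= stepw omega vs rho i.+1 <= 1.
Proof.
move=> Hom [/and4P [ne hd _ pth] _].
case: rho ne hd pth => // x r _ /= /eqP -> pth i lt.
rewrite /stepw /pnode /=.
move/pathP: pth => /(_ vs i lt) /Hom /andP[/ltW -> ->] //.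
Qed.

Lemma out_prob_ge0 (R : realType) (V : nat) (omega : 'I_V -> 'I_V -> R) d rho
  (s : outcome rho) :
  (forall i, (i < plen rho)%N -> 0 <= stepw omega d rho i.+1 <= 1) ->
  0 <= out_prob omega d s.
Proof.
move=> H; rewrite /out_prob; apply: prodr_ge0 => i _.
have /andP[h0 h1] := H i (ltn_ord i).
by case: (s i) => //; rewrite subr_ge0.
Qed.

Lemma Expect_le (R : realType) (V : nat) (omega : 'I_V -> 'I_V -> R) d rho
  (X Y : outcome rho -> R) :
  (forall s : outcome rho, 0 <= out_prob omega d s) -> (forall s, X s <= Y s) ->
  Expect omega d X <= Expect omega d Y.
Proof.
move=> Hp HXY; rewrite /Expect; apply: ler_sum => s _.
by apply: ler_wpM2l.
Qed.

Lemma a_var01 (R : realType) (V : nat) (rho : seq 'I_V) n (s : outcome rho) :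
  0 <= a_var R n s <= 1.
Proof. by rewrite a_varE; case: [forall _, _]; rewrite /= ?lexx ?ler01. Qed.

Arguments a_var01 R {V rho} n s.

Lemma z_bounds (R : realType) (V : nat) d (rho : seq 'I_V) j (s : outcome rho) :
  0 <= z_var R d j s <= 1.
Proof.
rewrite /z_var; apply: (big_rec (fun x : R => 0 <= x <= 1)); first by rewrite lexx ler01.
move=> i x _ /andP[x0 x1].
have /andP[a0 a1] := a_var01 R i.+1 s.
have Ht : 0 <= a_var R i.+1 s * ((pnode d rho i.+1 == j) : bool)%:R <= 1.
  by case: (_ == _); rewrite /= ?mulr1 ?mulr0 ?a0 ?a1 ?lexx ?ler01.
case/andP: Ht => t0 t1.
by rewrite ge_max t1 x1 le_max t0.
Qed.

Arguments z_bounds {R V} d {rho} j s.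

Lemma Expect_cst1 (R : realType) (V : nat) (omega : 'I_V -> 'I_V -> R) d rho :
  Expect omega d (fun _ : outcome rho => 1) = 1.
Proof.
rewrite /Expect; under eq_bigr do rewrite mulr1; exact: sum_out_prob.
Qed.

Lemma Expect_cst0 (R : realType) (V : nat) (omega : 'I_V -> 'I_V -> R) d rho :
  Expect omega d (fun _ : outcome rho => 0) = 0.
Proof. by rewrite /Expect big1 // => s _; rewrite mulr0. Qed.

Lemma Ez_bounds (R : realType) (V : nat) (e : rel 'I_V) (omega : 'I_V -> 'I_V -> R)
  vs vt ps rho j :
  (forall u v, e u v -> 0 < omega u v <= 1) -> feasible e omega vs vt ps rho ->
  0 <= Ez omega vs rho j <= 1.
Proof.
move=> Hom F.
have Hp : forall s : outcome rho, 0 <= out_prob omega vs s.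
  by move=> s; apply: out_prob_ge0; exact: (@feas_step _ _ _ _ _ _ _ _ Hom F).
apply/andP; split.
  rewrite -(Expect_cst0 _ _ omega vs rho); apply: Expect_le => //.
  by move=> s; case/andP: (@z_bounds R _ vs _ j s).
rewrite -(Expect_cst1 _ _ omega vs rho); apply: Expect_le => //.
by move=> s; case/andP: (@z_bounds R _ vs _ j s).
Qed.

Lemma Ez_visit (R : realType) (V : nat) (e : rel 'I_V) (omega : 'I_V -> 'I_V -> R)
  vs vt ps rho j :
  (forall u v, e u v -> 0 < omega u v <= 1) -> feasible e omega vs vt ps rho ->
  j \in behead rho -> ps <= Ez omega vs rho j.
Proof.
move=> Hom F jin.
have Hp : forall s : outcome rho, 0 <= out_prob omega vs s.
  by move=> s; apply: out_prob_ge0; exact: (@feas_step _ _ _ _ _ _ _ _ Hom F).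
apply: (le_trans F.2); rewrite /Psurv /Ez; apply: Expect_le => // s.
have kl : (index j (behead rho) < plen rho)%N.
  by rewrite /plen -size_behead index_mem.
pose k := Ordinal kl.
apply: (@le_trans _ _ (a_var R k.+1 s)).
  have := @a_mono R _ _ _ _ s kl; rewrite !a_varE.
  move: [forall i : 'I_(plen rho), (i < plen rho)%N ==> s i]
        [forall i : 'I_(plen rho), (i < k.+1)%N ==> s i] => [] [] /=;
  rewrite ?eqxx ?lexx ?ler01 ?oner_eq0 ?(@eq_sym R 0 1) ?oner_eq0 //.
have Hn : pnode vs rho k.+1 = j.
  rewrite /pnode /= -nth_behead nth_index //.
apply: (@le_trans _ _ (a_var R k.+1 s * ((pnode vs rho k.+1 == j) : bool)%:R)).
  by rewrite Hn eqxx mulr1.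
rewrite /z_var; apply: (big_max_ge (F := fun i : 'I_(plen rho) =>
  a_var R i.+1 s * ((pnode vs rho i.+1 == j) : bool)%:R)).
exact: mem_index_enum.
Qed.

Lemma Ez_novisit (R : realType) (V : nat) (omega : 'I_V -> 'I_V -> R) d rho j :
  j \notin behead rho -> Ez omega d rho j = 0.
Proof.
move=> jn; rewrite /Ez -(Expect_cst0 _ _ omega d rho) /Expect; apply: eq_bigr => s _.
congr (_ * _); rewrite /z_var.
apply: (big_rec (fun x : R => x = 0)) => // i x _ ->.
have -> : (pnode d rho i.+1 == j) = false.
  apply/negbTE; apply: contra jn => /eqP <-.
  rewrite /pnode -nth_behead; apply: mem_nth; rewrite size_behead; exact: ltn_ord.
by rewrite mulr0 maxxx.
Qed.

Theorem lemma2 (R : realType) (V : nat) (e : rel 'I_V)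
  (omega : 'I_V -> 'I_V -> R) (vs vt : 'I_V) (ps lambda : R)
  (Orienteering : ('I_V -> R) -> seq 'I_V) (c : 'I_V -> R) :
  irreflexive e -> symmetric e ->
  (forall u v, e u v -> 0 < omega u v <= 1) ->
  (forall u v, omega u v = omega v u) ->
  0 < ps <= 1 ->
  (exists rho, feasible e omega vs vt ps rho) ->
  1 <= lambda ->
  (forall nu : 'I_V -> R, (forall j, 0 <= nu j) ->
     feasible e omega vs vt ps (Orienteering nu) /\
     forall rho, feasible e omega vs vt ps rho ->
       \sum_(j < V) Ivis (Orienteering nu) j * nu j >=
       lambda^-1 * \sum_(j < V) Ivis rho j * nu j) ->
  (forall j, 0 < c j) ->
  let rhohat := Orienteering (fun j => zeta e omega vs vt ps j * c j) in
  forall rho, feasible e omega vs vt ps rho ->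
    \sum_(j < V) c j * Ez omega vs rhohat j >=
    ps / lambda * \sum_(j < V) c j * Ez omega vs rho j.
Proof.
move=> _ _ Hom _ /andP[ps0 ps1] [rho0 F0] l1 Hor Hc rhohat rho Fr.
pose S j := [set Ez omega vs r j | r in [set r | feasible e omega vs vt ps r]]%classic.
have hs j : has_sup (S j).
  split; first by exists (Ez omega vs rho0 j); exists rho0.
  exists 1 => x [r Fr' <-]; by case/andP: (@Ez_bounds _ _ _ _ _ _ _ _ j Hom Fr').
have zub j r : feasible e omega vs vt ps r -> Ez omega vs r j <= zeta e omega vs vt ps j.
  by move=> Fr'; apply: (sup_upper_bound (hs j)); exists r.
have z1 j : zeta e omega vs vt ps j <= 1.
  apply: ge_sup; first by exists (Ez omega vs rho0 j); exists rho0.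
  move=> x [r Fr' <-]; by case/andP: (@Ez_bounds _ _ _ _ _ _ _ _ j Hom Fr').
have z0 j : 0 <= zeta e omega vs vt ps j.
  apply: le_trans (zub j rho0 F0); by case/andP: (@Ez_bounds _ _ _ _ _ _ _ _ j Hom F0).
pose nu j := zeta e omega vs vt ps j * c j.
have nu0 j : 0 <= nu j by rewrite mulr_ge0 // ltW.
have [Fh Hopt] := Hor nu nu0.
have lam0 : 0 < lambda by apply: lt_le_trans l1.
apply: (@le_trans _ _ (ps * \sum_(j < V) Ivis rhohat j * nu j)); last first.
  rewrite mulr_sumr; apply: ler_sum => j _.
  rewrite /Ivis; case: (boolP (j \in behead rhohat)) => jin /=.
    rewrite mul1r mulrCA.
    apply: (le_trans (y := ps * c j)).
      by rewrite ler_piMl // mulr_ge0 // ltW.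
    rewrite [c j * _]mulrC; apply: ler_wpM2r; first exact: ltW.
    exact: (@Ez_visit _ _ _ _ _ _ _ _ j Hom Fh jin).
  by rewrite mul0r mulr0; apply: mulr_ge0; [exact: ltW | case/andP: (@Ez_bounds _ _ _ _ _ _ _ _ j Hom Fh)].
rewrite -mulrA; apply: ler_wpM2l; first exact: ltW.
apply: le_trans (Hopt rho Fr).
rewrite mulr_sumr mulr_sumr; apply: ler_sum => j _.
apply: ler_wpM2l; first by rewrite invr_ge0 ltW.
rewrite /Ivis; case: (boolP (j \in behead rho)) => jin /=.
  rewrite mul1r /nu mulrC; apply: ler_wpM2r; [exact: ltW | exact: zub].
by rewrite Ez_novisit // mulr0 mul0r.
Qed.
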